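(* If $G=(V,E)$ is an atomic bispanning graph and $e,f\in E$ are two edges with $e\neq f$, then $G/e-f$ (contract $e$, then delete $f$) is a bispanning graph.
   Context: Graphs are finite, undirected, may have parallel edges, no loops. A spanning tree is $T\subseteq E$ with $(V,T)$ connected and acyclic; $G$ is bispanning if $E$ is the union of two disjoint spanning trees; a bispanning graph is atomic if its only bispanning subgraphs are itself and single vertices. Contracting an edge $e$ with ends $p,q$ replaces $p,q$ by a single new vertex, deletes all edges with both ends in $\{p,q\}$, and makes other edges incident to $p$ or $q$ incident to the new vertex. *)

(* Defs.v *)
(* Multigraphs on a fixed vertex type V and edge type E,
   given by endpoint maps s t : E -> V.  A (sub)graph is a pair (W, F)
   of a vertex set W : {set V} and an edge set F : {set E}. *)
From mathcomp Require Import all_boot.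
Set Implicit Arguments. Unset Strict Implicit. Unset Printing Implicit Defensive.

Section Graphs.
Variables (V E : finType) (s t : E -> V).

Definition joins (z : E) (x y : V) : bool :=
  ((s z == x) && (t z == y)) || ((s z == y) && (t z == x)).

Definition inside (W : {set V}) (F : {set E}) : Prop :=
  forall z, z \in F -> s z \in W /\ t z \in W.

Definition adj (T : {set E}) : rel V :=
  [rel x y | [exists z in T, joins z x y]].

Definition connected (W : {set V}) (T : {set E}) : Prop :=
  W != set0 /\ forall x y, x \in W -> y \in W -> connect (adj T) x y.

(* (_, T) has no cycle: no cyclic sequence of k+1 distinct edges through
   k+1 distinct vertices (k = 0: a loop; k = 1: two parallel edges) *)
Definition acyclic (T : {set E}) : Prop :=
  forall k (es : 'I_k.+1 -> E) (vs : 'I_k.+1 -> V),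
    injective es -> injective vs -> (forall i, es i \in T) ->
    ~ (forall i, joins (es i) (vs i) (vs (ordS i))).

Definition spanning_tree (W : {set V}) (F T : {set E}) : Prop :=
  T \subset F /\ connected W T /\ acyclic T.

Definition bispanning (W : {set V}) (F : {set E}) : Prop :=
  inside W F /\
  exists T1 T2 : {set E},
    [/\ spanning_tree W F T1, spanning_tree W F T2,
        [disjoint T1 & T2] & T1 :|: T2 = F].

Definition atomic : Prop :=
  bispanning [set: V] [set: E] /\
  forall (W : {set V}) (F : {set E}),
    bispanning W F ->
    (W = [set: V] /\ F = [set: E]) \/ (exists v, W = [set v] /\ F = set0).

(* contraction of edge e (ends p = s e, q = t e): q is identified with p *)
Definition merge (e : E) (x : V) : V := if x == t e then s e else x.

End Graphs.

Definition contr_s (V E : finType) (s t : E -> V) (e : E) : E -> V :=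
  fun z => merge s t e (s z).
Definition contr_t (V E : finType) (s t : E -> V) (e : E) : E -> V :=
  fun z => merge s t e (t z).
Definition contr_del_V (V E : finType) (s t : E -> V) (e : E) : {set V} :=
  [set: V] :\ t e.
Definition contr_del_E (V E : finType) (s t : E -> V) (e f : E) : {set E} :=
  [set z | ~~ ((s z \in [set s e; t e]) && (t z \in [set s e; t e]))] :\ f.

(* Main.v *)
Require Import Defs.
From mathcomp Require Import all_boot zify.
Set Implicit Arguments. Unset Strict Implicit. Unset Printing Implicit Defensive.

Module Part1.

Lemma connect_indP (T : finType) (r : rel T) (P : T -> Prop) x :
  P x -> (forall y z, P y -> r y z -> P z) -> forall y, connect r x y -> P y.
Proof.
move=> Px step y /connectP [p pth ->]; elim: p x Px pth => [|z p IH] x Px //=.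
by case/andP=> rxz pth; apply: (IH z) => //; apply: step rxz.
Qed.

Section G.
Variables (V E : finType) (s t : E -> V).

Definition cn (T : {set E}) := connect (adj s t T).
Definition forest (T : {set E}) : bool :=
  [forall z in T, ~~ cn (T :\ z) (s z) (t z)].

Lemma adj_sym (T : {set E}) : symmetric (adj s t T).
Proof.
move=> x y; apply/existsP/existsP => [] [z /andP [zT j]]; exists z;
 rewrite zT /=; move: j; rewrite /joins; by case/orP=> ->; rewrite ?orbT.
Qed.

Lemma cn_sym (T : {set E}) x y : cn T x y = cn T y x.
Proof. exact: (sym_connect_sym (adj_sym T)). Qed.

Lemma cn_trans (T : {set E}) y x z : cn T x y -> cn T y z -> cn T x z.
Proof. exact: connect_trans. Qed.

Lemma cn_refl (T : {set E}) x : cn T x x.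
Proof. exact: connect0. Qed.

Lemma adj_edge (T : {set E}) z : z \in T -> adj s t T (s z) (t z).
Proof. by move=> zT; apply/existsP; exists z; rewrite zT /joins !eqxx. Qed.

Lemma cn_edge (T : {set E}) z : z \in T -> cn T (s z) (t z).
Proof. by move=> zT; apply: connect1; apply: adj_edge. Qed.

Lemma adjE (T : {set E}) x y : adj s t T x y ->
  exists2 z, z \in T & (x = s z /\ y = t z) \/ (x = t z /\ y = s z).
Proof.
case/existsP=> z /andP [zT]; rewrite /joins => j; exists z => //.
by case/orP: j => /andP [/eqP-> /eqP->]; [left|right].
Qed.

Lemma cn_span (K L : {set E}) : (forall z, z \in K -> cn L (s z) (t z)) ->
  forall x y, cn K x y -> cn L x y.
Proof.
move=> H x; apply: connect_indP; first exact: cn_refl.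
move=> y w xy /adjE [z zK [[? ?]|[? ?]]]; subst; apply: cn_trans xy _ => //.
  exact: H.
by rewrite cn_sym; apply: H.
Qed.

Lemma cn_sub (K L : {set E}) x y : K \subset L -> cn K x y -> cn L x y.
Proof.
move=> /subsetP KL; apply: cn_span => z zK; apply: cn_edge; exact: KL.
Qed.

Definition near (L : {set E}) z x := cn L x (s z) || cn L x (t z).

Lemma cn_split (L : {set E}) z a b : cn L a b ->
  cn (L :\ z) a b \/ (near (L :\ z) z a /\ near (L :\ z) z b).
Proof.
move: b; apply: connect_indP; first by left; exact: cn_refl.
move=> y w P /adjE [z' z'L H].
have [ez|nez] := eqVneq z' z.
  subst z'; right; split; last first.
    by case: H => [[_ ?]|[_ ?]]; subst; rewrite /near cn_refl ?orbT.
  case: P => [ay|[] //]; rewrite /near.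
  by case: H => [[? _]|[? _]]; subst; rewrite ay ?orbT.
have aw : cn (L :\ z) y w.
  apply: connect1; apply/existsP; exists z'; rewrite !inE nez z'L /joins.
  by case: H => [[? ?]|[? ?]]; subst; rewrite !eqxx ?orbT.
case: P => [ay|[na ny]]; first by left; apply: cn_trans ay aw.
right; split => //; move: ny; rewrite /near cn_sym in aw.
by rewrite /near; case/orP=> h; rewrite (cn_trans aw h) ?orbT.
Qed.

Lemma forestP (T : {set E}) : reflect (forall z, z \in T -> ~~ cn (T :\ z) (s z) (t z)) (forest T).
Proof. by apply: (iffP forall_inP). Qed.

Lemma forest_sub (A B : {set E}) : forest A -> B \subset A -> forest B.
Proof.
move=> /forestP fA BA; apply/forestP => z zB; apply: contra (fA z _); last exact: (subsetP BA).
by apply: cn_sub; apply: setSD.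
Qed.

Lemma forest_add (A : {set E}) u : forest A -> ~~ cn A (s u) (t u) -> forest (u |: A).
Proof.
move=> /forestP fA nu; apply/forestP => y; rewrite in_setU1.
have uA : u \notin A by apply: contra nu; exact: cn_edge.
have [->|neyu /= yA] := eqVneq y u; first by move=> _; rewrite setU1K.
apply/negP => h.
have AA : (u |: A) :\ y :\ u \subset A :\ y.
  apply/subsetP=> w; rewrite !inE; case/and3P=> wu -> /orP [/eqP wu'|->] //.
  by rewrite wu' eqxx in wu.
case: (cn_split u h) => [h1|[n1 n2]].
  by move: (fA y yA); rewrite (cn_sub AA h1).
have sub2 : A :\ y \subset A by apply: subsetDl.
move: n1 n2; rewrite /near => /orP [] h1 /orP [] h2;
  move: (cn_sub AA h1) (cn_sub AA h2) => {h1 h2} h1 h2.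
- by move: (fA y yA); rewrite (cn_trans h1 _) // cn_sym.
- move: nu; rewrite (cn_trans (cn_sub sub2 _) (cn_trans (cn_edge yA) (cn_sub sub2 h2))) //.
  by rewrite cn_sym.
- move: nu; rewrite cn_sym (cn_trans (cn_sub sub2 _) (cn_trans (cn_edge yA) (cn_sub sub2 h2))) //.
  by rewrite cn_sym.
- by move: (fA y yA); rewrite (cn_trans h1 _) // cn_sym.
Qed.

Lemma forest_notadd (A : {set E}) u : forest A -> ~~ forest (u |: A) -> cn A (s u) (t u).
Proof. by move=> fA; apply: contraR; apply: forest_add. Qed.

Lemma two_bridges (A : {set E}) w w' a b : forest A -> w' \in A ->
  cn (A :\ w) a b -> cn (A :\ w') a b -> cn (A :\ w :\ w') a b.
Proof.
move=> /forestP fA w'A h1 h2; case: (cn_split w' h1) => [//|[]].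
have sub : A :\ w :\ w' \subset A :\ w' by apply: setSD; apply: subsetDl.
rewrite /near => /orP [] n1 /orP [] n2.
- by apply: cn_trans n1 _; rewrite cn_sym.
- move: (fA w' w'A); rewrite (cn_trans (cn_sub sub _) (cn_trans h2 (cn_sub sub n2))) //.
  by rewrite cn_sym.
- move: (fA w' w'A); rewrite cn_sym (cn_trans (cn_sub sub _) (cn_trans h2 (cn_sub sub n2))) //.
  by rewrite cn_sym.
- by apply: cn_trans n1 _; rewrite cn_sym.
Qed.

Lemma bridge_exists n : forall (A S : {set E}) a b, #|A :\: S| = n -> forest A ->
  S \subset A -> cn A a b -> ~~ cn S a b ->
  exists w, [/\ w \in A, w \notin S & ~~ cn (A :\ w) a b].
Proof.
elim: n => [|n IH] A S a b hn fA SA ab nab.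
  move/eqP: hn; rewrite cards_eq0 setD_eq0 => AS.
  by move: nab; rewrite (cn_sub AS ab).
have [w wAS] : exists w, w \in A :\: S.
  by apply/set0Pn; rewrite -card_gt0 hn.
move: (wAS); rewrite inE => /andP [wS wA].
case: (boolP (cn (A :\ w) a b)) => [abw|nabw]; last by exists w.
have hn' : #|(A :\ w) :\: S| = n.
  have -> : (A :\ w) :\: S = (A :\: S) :\ w.
    by apply/setP => x; rewrite !inE; bool_congr.
  by move: hn; rewrite (cardsD1 w) wAS add1n => [[]].
have SAw : S \subset A :\ w.
  by apply/subsetP => x xS; rewrite !inE (subsetP SA x xS) andbT; apply: contraNneq wS => <-.
have [w' [w'A w'S nw']] := IH _ _ _ _ hn' (forest_sub fA (subsetDl _ _)) SAw abw nab.
exists w'; split => //; first by move: w'A; rewrite inE => /andP [].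
apply: contra nw' => h; apply: two_bridges => //.
by move: w'A; rewrite inE => /andP [].
Qed.

Lemma count_forest n : forall (T K : {set E}), #|T :\: K| = n -> forest T ->
  (forall z, z \in T -> cn K (s z) (t z)) -> #|T| <= #|K|.
Proof.
elim: n => [|n IH] T K hn fT sp.
  by move/eqP: hn; rewrite cards_eq0 setD_eq0 => TK; apply: subset_leq_card.
have [z zTK] : exists z, z \in T :\: K by apply/set0Pn; rewrite -card_gt0 hn.
move: (zTK); rewrite inE => /andP [zK zT].
have nz : ~~ cn (T :\ z) (s z) (t z) by move/forestP: fT; apply.
have [k kK nk] : exists2 k, k \in K & ~~ cn (T :\ z) (s k) (t k).
  apply/exists_inP; apply: contraR nz; rewrite negb_exists_in => /forall_inP H.
  apply: (cn_span _ (sp z zT)) => k kK; move: (H k kK); by rewrite negbK.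
have kT : k \notin T :\ z by apply: contra nk; apply: cn_edge.
have fT' : forest (k |: (T :\ z)) by apply: forest_add => //; apply: forest_sub fT (subsetDl _ _).
have cT : #|k |: (T :\ z)| = #|T| by rewrite cardsU1 kT (cardsD1 z T) zT.
rewrite -cT; apply: (IH _ K) => //.
- have -> : (k |: (T :\ z)) :\: K = (T :\: K) :\ z.
    apply/setP => x; rewrite !inE.
    case: (eqVneq x k) => [->|xk] /=; first by rewrite kK /= !andbF.
    by rewrite andbCA.
  by move: hn; rewrite (cardsD1 z) zTK add1n => [[]].
- move=> y; rewrite in_setU1 => /orP [/eqP->|]; first exact: cn_edge.
  by rewrite inE => /andP [_ yT]; apply: sp.
Qed.
End G.

End Part1.
Import Part1.
Module Part2.
Import Part1.

Section Aug.
Variables (V E : finType) (s t : E -> V) (e : E).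
Local Notation cn := (cn s t).
Local Notation forest := (forest s t).

Definition ind (X : {set E}) := forest (e |: X).
Definition valid (I : bool -> {set E}) :=
  [/\ forall x, x \in I true -> x \notin I false, forall j, ind (I j) & forall j, e \notin I j].
Definition arc (I : bool -> {set E}) : rel E := fun y w =>
  (y != e) && [exists j, [&& w \in I j, y \notin I j & ind (y |: (I j :\ w))]].
Definition sink (I : bool -> {set E}) y := [exists j, (y \notin I j) && ind (y |: I j)].

Lemma valid_disj I j x : valid I -> x \in I j -> x \notin I (~~ j).
Proof.
case=> d _ _; case: j => /= xj; first exact: d.
by apply/negP => /d; rewrite xj.
Qed.

Lemma circuit (A : {set E}) u y w : forest (u |: A) -> u \notin A -> forest A ->
  ~~ forest (y |: A) -> y \notin A -> forest (y |: (A :\ w)) ->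
  forest (u |: (y |: (A :\ w))).
Proof.
move=> fuA uA fA nfy yA fy; apply: forest_add => //; apply/negP => h.
have nu : ~~ cn A (s u) (t u).
  by move/forestP: fuA => /(_ u (setU11 _ _)); rewrite setU1K.
move: nu; rewrite (cn_span _ h) // => z; rewrite in_setU1 => /orP [/eqP->|].
  exact: forest_notadd.
by rewrite inE => /andP [_ zA]; apply: cn_edge.
Qed.

Definition addj (I : bool -> {set E}) j x := fun b => if b == j then x |: I j else I b.
Definition mvj (I : bool -> {set E}) j u :=
  fun b => if b == j then u |: I j else I b :\ u.

Lemma add_sink I x : valid I -> x \notin I true -> x \notin I false -> x != e ->
  sink I x -> exists J, valid J /\ J true :|: J false = x |: (I true :|: I false).
Proof.
move=> vI x1 x2 xe /existsP [j /andP [xj ij]].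
have [d iI eI] := vI.
exists (addj I j x); split.
  split.
  - case: j {xj ij} => y; rewrite /addj /= ?in_setU1.
      by case/orP => [/eqP ?|/d //]; subst.
    move=> yT; rewrite negb_or (d _ yT) andbT.
    by apply/eqP => ?; subst; rewrite yT in x1.
  - by move=> b; rewrite /addj; case: eqP => [?|_]; subst; auto.
  - by move=> b; rewrite /addj; case: eqP => [?|_]; subst; rewrite ?in_setU1 ?negb_or ?(eq_sym e) ?xe ?eI.
case: j {xj ij}; rewrite /addj /=; apply/setP => y; rewrite !inE.
  by rewrite orbA.
by rewrite orbCA.
Qed.

Lemma nsinkP I y j : ~~ sink I y -> y \notin I j -> ~~ ind (y |: I j).
Proof. by move=> ns yj; apply: contra ns => h; apply/existsP; exists j; rewrite yj. Qed.

Lemma mv_valid I j u : valid I -> u \in I (~~ j) -> u \notin I j -> ind (u |: I j) ->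
  valid (mvj I j u).
Proof.
move=> vI uK uJ iu; have [d iI eI] := vI.
have ue : u != e by apply: contraNneq (eI (~~ j)) => <-.
split.
- case: j uK uJ iu => uK uJ iu y; rewrite /mvj /= !inE.
    case/orP => [/eqP ?|/d yF]; subst; first by rewrite eqxx.
    by rewrite negb_and yF orbT.
  case/andP => yu /d yF; rewrite negb_or yF andbT //.
- move=> b; rewrite /mvj; case: eqP => // _; apply: forest_sub (iI b) _.
  by apply: setUS; apply: subsetDl.
- move=> b; rewrite /mvj; case: eqP => _; rewrite !inE ?negb_or ?eI ?andbT //.
  by rewrite eq_sym ue.
by rewrite (negbTE (eI b)) andbF.
Qed.

Lemma mv_union (I : bool -> {set E}) j u : u \in I (~~ j) ->
  mvj I j u true :|: mvj I j u false = I true :|: I false.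
Proof.
case: j => /= uK; rewrite /mvj /=; apply/setP => y; rewrite !inE;
 case: (eqVneq y u) => [->|]; rewrite ?uK ?orbT //.
Qed.


Lemma arc_mv I J u y w : valid I -> u \notin I J -> ind (u |: I J) -> u \in I (~~ J) ->
  ~~ sink I y -> ~~ sink I w -> arc I y w -> arc (mvj I J u) y w.
Proof.
move=> vI uJ iu uK ny nw /andP [ye /existsP [L /and3P [wL yL iy]]].
have [d iI eI] := vI.
have su : sink I u by apply/existsP; exists J; rewrite uJ.
have wu : w != u by apply: contraNneq nw => ->.
have yu : y != u by apply: contraNneq ny => ->.
have we : w != e by apply: contraNneq (eI L) => <-.
have ue : u != e by apply: contraNneq (eI (~~ J)) => <-.
rewrite /arc ye /=; apply/existsP; exists L; rewrite /mvj.
case: (eqVneq L J) => [LJ|LJ]; last first.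
  rewrite !inE wu wL /= negb_and yL orbT /=; apply: forest_sub iy _.
  by apply: setUS; apply: setUS; apply/subsetP => x; rewrite !inE => /and3P [-> _ ->].
subst L; rewrite !inE wL orbT negb_or yu yL /=.
have A1 : forest (u |: (e |: I J)) by move: iu; rewrite /ind setUCA.
have A2 : ~~ forest (y |: (e |: I J)) by move: (nsinkP ny yL); rewrite /ind setUCA.
have A3 : forest (y |: ((e |: I J) :\ w)).
  move: iy; rewrite /ind; congr (forest _); apply/setP => x; rewrite !inE.
  by case: (eqVneq x e) => [->|]; rewrite ?(eq_sym e w) ?we ?orbT //= !orbF.
have := circuit A1 _ (iI J) A2 _ A3.
rewrite !inE negb_or ue uJ negb_or ye yL => /(_ isT isT).
rewrite /ind; congr (forest _); apply/setP => x; rewrite !inE.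
case: (eqVneq x e) => [->|xe]; first by rewrite (eq_sym e w) we !orbT.
case: (eqVneq x u) => [->|xu]; first by rewrite (eq_sym u w) wu !orbT.
by [].
Qed.

Lemma augment m : forall I x0 p, size p <= m -> valid I -> x0 \notin I true ->
  x0 \notin I false -> x0 != e -> path (arc I) x0 p -> sink I (last x0 p) ->
  exists J, valid J /\ J true :|: J false = x0 |: (I true :|: I false).
Proof.
elim: m => [|m IH] I x0 p.
  by case: p => // _ vI x1 x2 xe _ sk; apply: add_sink.
move=> sz vI x1 x2 xe pth sk.
case: (boolP (sink I x0)) => [sx|nsx]; first by apply: add_sink.
have hp : has (sink I) p.
  apply/hasP; exists (last x0 p) => //; move: (mem_last x0 p); rewrite inE.
  by case/orP => // /eqP ex; move: sk; rewrite ex (negbTE nsx).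
case: (split_find hp) sz pth => u q r su nq sz pth.
move: pth; rewrite cat_path rcons_path => /andP [/andP [pq aqu] _].
have [J /andP [uJ iu]] := existsP su.
have [d iI eI] := vI.
have uK : u \in I (~~ J).
  case/andP: aqu => _ /existsP [L /and3P [uL _ _]].
  case: L uL; case: J uJ {iu} => /= uJ uL //; by rewrite uL in uJ.
have x0u : x0 != u by apply: contraNneq nsx => ->.
rewrite -(mv_union uK); apply: (IH (mvj I J u) x0 q).
- move: sz; rewrite size_cat size_rcons addSn ltnS; apply: leq_trans; exact: leq_addr.
- exact: mv_valid.
- rewrite /mvj; case: eqP => [?|_]; subst; rewrite !inE ?negb_or ?negb_and ?x0u ?x1 //.
- rewrite /mvj; case: eqP => [?|_]; subst; rewrite !inE ?negb_or ?negb_and ?x0u ?x2 //.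
- exact: xe.
- apply: (sub_in_path (P := predC (sink I))) pq; last by rewrite /= nsx /= all_predC.
  by move=> y w; rewrite !inE => ny nw; apply: arc_mv.
- case/andP: aqu => _ /existsP [L /and3P [uL vL iv]].
  have LJ : L = ~~ J.
    case: L uL vL iv; case: J uJ {iu uK} => /= uJ uL //; by rewrite uL in uJ.
  subst L; apply/existsP; exists (~~ J); rewrite /mvj.
  case: eqP => [|_]; first by case: J {uJ iu uK uL vL iv}.
  by rewrite !inE negb_and vL orbT.
Qed.
End Aug.

End Part2.
Import Part2.
Module Part3.
Import Part1 Part2.

Section Part.
Variables (V E : finType) (s t : E -> V) (e : E).
Hypothesis nle : s e != t e.
Local Notation cn := (cn s t).
Local Notation forest := (forest s t).
Local Notation ind := (Part2.ind s t e).
Local Notation valid := (Part2.valid s t e).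
Local Notation arc := (Part2.arc s t e).
Local Notation sink := (Part2.sink s t e).

Lemma cn0 x y : cn set0 x y -> x = y.
Proof.
move=> h; have : (fun y => x = y) y.
  apply: (connect_indP (P := fun y => x = y)) h => // a b _ /existsP [z /andP []].
  by rewrite inE.
done.
Qed.

Lemma forest1 : forest [set e].
Proof.
apply/forestP => z; rewrite inE => /eqP ->; rewrite setDv.
by apply/negP => /cn0 h; move: nle; rewrite h eqxx.
Qed.

Definition tight (S : {set E}) := exists2 R : {set E}, R \subset S &
  exists K : bool -> {set E},
    (forall j z, z \in e |: R -> cn (K j) (s z) (t z)) /\
    #|K true| + #|K false| <= #|e |: R|.

Lemma tight_step I x0 S : valid I -> I true :|: I false = S -> x0 \notin S ->
  e \notin x0 |: S ->
  ~~ [exists y, connect (arc I) x0 y && sink I y] -> tight (x0 |: S).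
Proof.
move=> vI uI x0S eS nex; have [d iI eI] := vI.
set R := [set y | connect (arc I) x0 y].
have x0R : x0 \in R by rewrite inE connect0.
have RS : R \subset x0 |: S.
  apply/subsetP => y; rewrite inE; apply: (connect_indP (P := fun y => y \in x0 |: S)); first by rewrite setU11.
  move=> a b _ /andP [_ /existsP [j /and3P [bj _ _]]].
  by rewrite -uI !inE; case: j bj => ->; rewrite ?orbT.
have nsR : forall y, y \in R -> ~~ sink I y.
  move=> y; rewrite inE => xy; apply: contra nex => sy; apply/existsP; exists y.
  by rewrite xy.
have ye : forall y, y \in R -> y != e.
  by move=> y /(subsetP RS) yS; apply: contraNneq eS => <-.
have span : forall j y, y \in R -> cn (e |: (I j :&: R)) (s y) (t y).
  move=> j y yR; case: (boolP (y \in I j)) => yj.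
    by apply: cn_edge; rewrite in_setU1 in_setI yj yR orbT.
  have fA : forest (e |: I j) := iI j.
  have cA : cn (e |: I j) (s y) (t y).
    apply: forest_notadd => //; move: (nsinkP (nsR y yR) yj).
    by rewrite /Part2.ind setUCA.
  apply/negPn/negP => nc.
  have sub : e |: (I j :&: R) \subset e |: I j.
    by apply: setUS; apply: subsetIl.
  have [w [wA wS nw]] := bridge_exists (erefl _) fA sub cA nc.
  have we : w != e by apply: contraNneq wS => ->; rewrite setU11.
  have wj : w \in I j by move: wA; rewrite in_setU1 (negbTE we).
  have wR : w \notin R by move: wS; rewrite !inE (negbTE we) wj.
  have ayw : arc I y w.
    rewrite /Part2.arc ye //=; apply/existsP; exists j; rewrite wj yj /= /Part2.ind.
    have -> : e |: (y |: (I j :\ w)) = y |: ((e |: I j) :\ w).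
      apply/setP => x; rewrite !inE.
      by case: (eqVneq x e) => [->|xe]; rewrite ?(eq_sym e w) ?we ?orbT //= orbCA.
    apply: forest_add => //; apply: forest_sub fA _; exact: subsetDl.
  by move: wR; rewrite inE (connect_trans _ (connect1 ayw)) //; move: yR; rewrite inE.
exists R => //.
exists (fun j => e |: (I j :&: R)); split.
  move=> j z; rewrite in_setU1 => /orP [/eqP->|zR]; last exact: span.
  by apply: cn_edge; rewrite setU11.
have eR : e \notin R by apply/negP => /ye; rewrite eqxx.
have eIR : forall j, e \notin I j :&: R by move=> j; rewrite inE negb_and eR orbT.
rewrite !cardsU1 eR !eIR (cardsD1 x0 R) x0R.
have -> : R :\ x0 = (I true :&: R) :|: (I false :&: R).
  apply/setP => y; rewrite !inE; case: (eqVneq y x0) => [->|yx] /=.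
    by move: x0S; rewrite -uI inE negb_or => /andP [/negbTE -> /negbTE ->].
  case: (boolP (connect (arc I) x0 y)) => c; rewrite ?andbF ?andbT //.
  have yR : y \in R by rewrite inE.
  by move/(subsetP RS): yR; rewrite -uI !inE (negbTE yx).
have dis : (I true :&: R) :&: (I false :&: R) = set0.
  apply/setP => y; rewrite !inE; case: (boolP (y \in I true)) => [/d /negbTE ->|] //.
  by rewrite andbF.
move: (cardsUI (I true :&: R) (I false :&: R)); rewrite dis cards0 addn0 => ->.
by rewrite /= !add1n addnS.
Qed.

Lemma partition n : forall S : {set E}, #|S| = n -> e \notin S ->
  (exists I, valid I /\ I true :|: I false = S) \/ tight S.
Proof.
elim: n => [|n IH] S hS eS.
  left; exists (fun _ => set0); move/eqP: hS; rewrite cards_eq0 => /eqP ->.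
  split; last by rewrite setU0.
  split; [by move=> ?; rewrite inE | by move=> j; rewrite /Part2.ind setU0; exact: forest1 | by move=> j; rewrite inE].
have [x0 x0S] : exists x0, x0 \in S by apply/set0Pn; rewrite -card_gt0 hS.
have hS' : #|S :\ x0| = n by move: hS; rewrite (cardsD1 x0) x0S add1n => [[]].
have eS' : e \notin S :\ x0 by rewrite inE negb_and eS orbT.
have defS : x0 |: (S :\ x0) = S by rewrite setD1K.
case: (IH _ hS' eS') => [[I [vI uI]]|[R RS tR]]; last first.
  by right; exists R => //; apply: subset_trans RS _; apply: subsetDl.
have x0S' : x0 \notin S :\ x0 by rewrite !inE eqxx.
have x0e : x0 != e by apply: contraNneq eS => <-.
case: (boolP [exists y, connect (arc I) x0 y && sink I y]) => [/existsP [y /andP [/connectP [p pth ->] sk]]|nex].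
  left; have := @augment _ _ s t e (size p) I x0 p (leqnn _) vI.
  rewrite -uI in x0S'; move: x0S'; rewrite inE negb_or => /andP [x1 x2].
  case/(_ x1 x2 x0e pth sk) => J [vJ uJ]; exists J; split => //.
  by rewrite uJ uI defS.
right; rewrite -defS; apply: (tight_step vI uI x0S') nex.
by rewrite defS.
Qed.
End Part.

End Part3.
Import Part3.
Module Part4.
Import Part1 Part2 Part3.

Section Conv.
Variables (V E : finType) (s t : E -> V).
Local Notation cn := (cn s t).
Local Notation forest := (forest s t).

Lemma joins_cn (T : {set E}) z x y : joins s t z x y -> z \in T -> cn T x y.
Proof.
rewrite /joins => /orP [] /andP [/eqP <- /eqP <-] zT; first exact: cn_edge.
by rewrite cn_sym; exact: cn_edge.
Qed.

Lemma joins2 z a b c d : joins s t z a b -> joins s t z c d ->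
  (a = c /\ b = d) \/ (a = d /\ b = c).
Proof.
rewrite /joins => /orP [] /andP [/eqP <- /eqP <-] /orP [] /andP [/eqP <- /eqP <-]; by [left|right].
Qed.

Lemma forest_acyclic (T : {set E}) : forest T -> acyclic s t T.
Proof.
move=> /forestP fT k es vs ies ivs esT hj.
set z := es ord0.
have adjz : forall i : 'I_k.+1, i != ord0 -> cn (T :\ z) (vs i) (vs (ordS i)).
  move=> i i0; apply: joins_cn (hj i) _; rewrite !inE esT andbT.
  by apply: contra i0 => /eqP h; apply/eqP; exact: ies h.
have chain : forall n (hn : n < k.+1), 0 < n ->
    cn (T :\ z) (vs (ordS ord0)) (vs (Ordinal hn)).
  elim => // [[|n] IH] hn _.
    have -> : Ordinal hn = ordS (ord0 : 'I_k.+1).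
      by apply: val_inj => /=; rewrite modn_small.
    exact: cn_refl.
  have hn' : n.+1 < k.+1 by apply: ltnW.
  apply: cn_trans (IH hn' isT) _.
  have -> : Ordinal hn = ordS (Ordinal hn') by apply: val_inj => /=; rewrite modn_small.
  by apply: adjz; apply/eqP => /(congr1 val).
have c10 : cn (T :\ z) (vs (ordS ord0)) (vs ord0).
  case: (posnP k) => [k0|kpos].
    have -> : ordS (ord0 : 'I_k.+1) = ord0 by apply: val_inj; rewrite /= k0.
    exact: cn_refl.
  apply: cn_trans (chain k (ltnSn k) kpos) _.
  have -> : (ord0 : 'I_k.+1) = ordS (Ordinal (ltnSn k)) by apply: val_inj; rewrite /= modnn.
  by apply: adjz; apply/eqP => /(congr1 val) /= k0; rewrite k0 in kpos.
have zT : z \in T := esT ord0.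
move: (hj ord0) (fT z zT); rewrite /joins -/z => /orP [] /andP [/eqP -> /eqP ->].
  by rewrite cn_sym c10.
by rewrite c10.
Qed.

Lemma acyclic_forest (T : {set E}) : acyclic s t T -> forest T.
Proof.
move=> ac; apply/forestP => z zT; apply/negP => h.
case: (eqVneq (s z) (t z)) => [st|nst].
  apply: (ac 0 (fun _ => z) (fun _ => s z)) => //.
  - by move=> i j _; rewrite (ord1 i) (ord1 j).
  - by move=> i j _; rewrite (ord1 i) (ord1 j).
  - by move=> i; rewrite /joins st eqxx.
rewrite cn_sym in h; case/connectP: h => p pth lst.
case: (shortenP pth) lst => p' pth' uq _ lst.
have mpos : 0 < size p'.
  by case: p' {pth' uq} lst => //= lst; rewrite lst eqxx in nst.
set c := t z :: p'; set m := size p'.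
pose pw i := odflt z [pick w in T :\ z | joins s t w (nth (t z) c i) (nth (t z) c i.+1)].
have pk : forall i, i < m -> pw i \in T :\ z /\ joins s t (pw i) (nth (t z) c i) (nth (t z) c i.+1).
  move=> i im; move/pathP: pth' => /(_ (t z) i im) /existsP [w /andP [wT jw]].
  rewrite /pw; case: pickP => [w' /andP [w'T jw']|/(_ w)]; first by [].
  by rewrite wT /= jw.
pose es (i : 'I_m.+1) := if val i == m then z else pw i.
pose vs (i : 'I_m.+1) := nth (t z) c i.
have szc : size c = m.+1 by [].
have lastc : nth (t z) c m = s z by rewrite lst /c (last_nth (t z)).
apply: (ac m es vs).
- move=> i j; rewrite /es.
  have ltm : forall i : 'I_m.+1, val i != m -> i < m.
    by move=> i' im; rewrite ltn_neqAle im -ltnS ltn_ord.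
  case: (eqVneq (val i) m) => [im|im]; case: (eqVneq (val j) m) => [jm|jm].
  + by move=> _; apply: val_inj; rewrite im jm.
  + move=> zj; case: (pk j (ltm j jm)); rewrite -zj !inE eqxx //.
  + move=> zi; case: (pk i (ltm i im)); rewrite zi !inE eqxx //.
  + move=> ij; have [_ ji] := pk i (ltm i im); have [_ jj] := pk j (ltm j jm).
    rewrite ij in ji; have lti := ltm i im; have ltj := ltm j jm.
    have u : forall a b, a < m.+1 -> b < m.+1 -> nth (t z) c a = nth (t z) c b -> a = b.
      by move=> a b ha hb /eqP; rewrite nth_uniq ?szc // => /eqP.
    case: (joins2 ji jj) => [[h _]|[h1 h2]].
      by apply: val_inj; apply: u h; rewrite ltn_ord.
    have e1 : (i : nat) = j.+1 by apply: u h1 => //; rewrite ltnS.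
    have e2 : (i : nat).+1 = j.
      by apply: u h2; rewrite ?ltnS // ltnW.
    by move: e2; rewrite e1 => /eqP; rewrite -addn2 -{2}[nat_of_ord j]addn0 eqn_add2l.
- move=> i j /eqP; rewrite /vs nth_uniq ?szc // => /eqP h; exact: val_inj.
- move=> i; rewrite /es; case: eqP => // /eqP im.
  have := pk i _; rewrite ltn_neqAle im -ltnS ltn_ord => /(_ isT) [].
  by rewrite inE => /andP [].
- move=> i; rewrite /es /vs; case: eqP => [im|/eqP im].
    rewrite im lastc /= im modnn /joins !eqxx; done.
  have im' : i < m by rewrite ltn_neqAle im -ltnS ltn_ord.
  by rewrite /= modn_small ?ltnS //; case: (pk i im').
Qed.
End Conv.

End Part4.
Import Part4.
Module Part5.
Import Part1 Part2 Part3 Part4.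

Section Contr.
Variables (V E : finType) (s t : E -> V) (e : E).
Hypothesis nle : s e != t e.
Local Notation cn := (cn s t).
Local Notation s' := (contr_s s t e).
Local Notation t' := (contr_t s t e).
Local Notation mg := (Defs.merge s t e).

Lemma mg_se : mg (s e) = s e.
Proof. by rewrite /Defs.merge (negbTE nle). Qed.
Lemma mg_te : mg (t e) = s e.
Proof. by rewrite /Defs.merge eqxx. Qed.

Lemma cn_mg (L : {set E}) x : cn (e |: L) (mg x) x.
Proof.
rewrite /Defs.merge; case: eqP => [->|_]; last exact: cn_refl.
by apply: cn_edge; rewrite setU11.
Qed.

Lemma down (L : {set E}) x y : cn (e |: L) x y ->
  connect (adj s' t' L) (mg x) (mg y).
Proof.
move: y; apply: (connect_indP (P := fun y => connect (adj s' t' L) (mg x) (mg y))).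
  exact: connect0.
move=> y w P /adjE [z]; rewrite in_setU1 => /orP [/eqP ->|zL] H.
  by case: H => [[? ?]|[? ?]]; subst; rewrite ?mg_se ?mg_te in P *.
apply: connect_trans P (connect1 _); apply/existsP; exists z; rewrite zL /joins /contr_s /contr_t.
by case: H => [[? ?]|[? ?]]; subst; rewrite !eqxx ?orbT.
Qed.

Lemma up (L : {set E}) a b : connect (adj s' t' L) a b -> cn (e |: L) a b.
Proof.
move: b; apply: (connect_indP (P := fun b => cn (e |: L) a b)); first exact: cn_refl.
move=> y w P /adjE [z zL H]; apply: cn_trans P _.
have zL' : z \in e |: L by rewrite setU1r.
rewrite /contr_s /contr_t in H.
case: H => [[? ?]|[? ?]]; subst.
  apply: (cn_trans (cn_mg L (s z))); apply: (cn_trans (cn_edge s t zL')); rewrite cn_sym; exact: cn_mg.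
apply: (cn_trans (cn_mg L (t z))); rewrite cn_sym; apply: (cn_trans (cn_mg L (s z))).
exact: (cn_edge s t zL').
Qed.

Lemma contr_forest (L : {set E}) : e \notin L -> forest s t (e |: L) -> forest s' t' L.
Proof.
move=> eL /forestP fL; apply/forestP => z zL; apply/negP => /up h.
have ze : z != e by apply: contraNneq eL => <-.
have := fL z (setU1r _ zL); rewrite /contr_s /contr_t in h.
have -> : (e |: L) :\ z = e |: (L :\ z).
  by apply/setP => x; rewrite !inE; case: (eqVneq x e) => [->|]; rewrite ?(eq_sym e z) ?ze.
move/negP; apply.
apply: (cn_trans (y := mg (s z))); first by rewrite cn_sym; exact: cn_mg.
apply: (cn_trans h); exact: cn_mg.
Qed.
End Contr.

End Part5.
Import Part5.
Module Part6.
Import Part1 Part2 Part3 Part4 Part5.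

Section Fin.
Variables (V E : finType) (s t : E -> V).
Local Notation cn := (cn s t).
Local Notation forest := (forest s t).

Lemma full_span (Tf K F : {set E}) : forest Tf -> Tf \subset F ->
  (forall z, z \in F -> cn K (s z) (t z)) -> #|K| <= #|Tf| ->
  forall z, z \in F -> cn Tf (s z) (t z).
Proof.
move=> fT TF sp ck z zF; apply/negPn/negP => nz.
have zT : z \notin Tf by apply: contra nz; apply: cn_edge.
have := count_forest (erefl _) (forest_add fT nz) (K := K).
rewrite cardsU1 zT add1n => /(_ _) h.
have : #|Tf| < #|K|.
  apply: h => y; rewrite in_setU1 => /orP [/eqP->|yT]; first exact: sp.
  by apply: sp; apply: (subsetP TF).
by rewrite ltnNge ck.
Qed.

Lemma tree_span W F T : spanning_tree s t W F T -> forall x y, x \in W -> y \in W -> cn T x y.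
Proof. by case=> _ [[_ c] _]. Qed.

Lemma cn_restrict (L : {set E}) (W : {set V}) a b :
  (forall z, z \in L -> (s z \in W) = (t z \in W)) -> a \in W -> cn L a b ->
  cn (L :&: [set z | s z \in W]) a b.
Proof.
move=> cl aW h.
suff : b \in W /\ cn (L :&: [set z | s z \in W]) a b by case.
move: b h; apply: (connect_indP (P := fun b => b \in W /\ cn (L :&: [set z | s z \in W]) a b)).
  by split => //; exact: cn_refl.
move=> y w [yW P] /adjE [z zL H].
have zL' : z \in L :&: [set z | s z \in W].
  by rewrite !inE zL; case: H => [[? ?]|[? ?]]; subst; rewrite ?yW // cl.
case: H => [[? ?]|[? ?]]; subst.
  by rewrite -cl //; split => //; apply: cn_trans P (cn_edge s t zL').
rewrite -cl // in yW; split => //.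
by apply: cn_trans P _; rewrite cn_sym; apply: cn_edge.
Qed.

Lemma tight_false (Hat : atomic s t) (e f : E) (hef : e != f) (T1 T2 : {set E})
  (sp1 : spanning_tree s t setT setT T1) (sp2 : spanning_tree s t setT setT T2)
  (dis : [disjoint T1 & T2]) (un : T1 :|: T2 = setT) (S : {set E})
  (fS : f \notin S) : ~ tight s t e S.
Proof.
case=> R RS [K [spK cK]].
set F := e |: R.
have fT1 : forest T1 by apply: acyclic_forest; case: sp1 => _ [].
have fT2 : forest T2 by apply: acyclic_forest; case: sp2 => _ [].
have c1 : #|T1 :&: F| <= #|K true|.
  apply: (count_forest (erefl _) (forest_sub fT1 (subsetIl _ _))) => z; rewrite inE => /andP [_].
  exact: spK.
have c2 : #|T2 :&: F| <= #|K false|.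
  apply: (count_forest (erefl _) (forest_sub fT2 (subsetIl _ _))) => z; rewrite inE => /andP [_].
  exact: spK.
have cF : #|T1 :&: F| + #|T2 :&: F| = #|F|.
  have := cardsUI (T1 :&: F) (T2 :&: F).
  have -> : (T1 :&: F) :|: (T2 :&: F) = F by rewrite -setIUl un setTI.
  have -> : (T1 :&: F) :&: (T2 :&: F) = set0.
    apply/setP => x; rewrite !inE; case: (boolP (x \in T1)) => //= x1.
    by rewrite (disjointFr dis x1) andbF.
  by rewrite cards0 addn0 => ->.
have s1 : forall z, z \in F -> cn (T1 :&: F) (s z) (t z).
  apply: full_span (spK true) _ => //; [exact: forest_sub fT1 (subsetIl _ _)| exact: subsetIr | ].
  move: c1 c2 cF cK; rewrite cardsU1; lia.
have s2 : forall z, z \in F -> cn (T2 :&: F) (s z) (t z).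
  apply: full_span (spK false) _ => //; [exact: forest_sub fT2 (subsetIl _ _)| exact: subsetIr | ].
  move: c1 c2 cF cK; rewrite cardsU1; lia.
set W := [set v | cn F (s e) v].
have cl : forall L : {set E}, L \subset F -> forall z, z \in L -> (s z \in W) = (t z \in W).
  move=> L LF z zL; have zF := subsetP LF z zL; rewrite !inE.
  apply/idP/idP => h; first by apply: cn_trans h (cn_edge s t zF).
  by apply: cn_trans h _; rewrite cn_sym; apply: cn_edge.
set F2 := F :&: [set z | s z \in W].
have eF : e \in F by rewrite setU11.
have eW : s e \in W by rewrite inE cn_refl.
have tree : forall T : {set E}, forest T -> (forall z, z \in F -> cn (T :&: F) (s z) (t z)) ->
    spanning_tree s t W F2 ((T :&: F) :&: [set z | s z \in W]).
  move=> T fT sT; split.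
    by apply/subsetP => z; rewrite !in_setI => /andP [/andP [_ zF] zW]; rewrite zF zW.
  split; last first.
    apply: forest_acyclic; apply: forest_sub fT _; rewrite -setIA; exact: subsetIl.
  split; first by apply/set0Pn; exists (s e).
  move=> x y; rewrite !inE => xW yW.
  have h : forall v, cn F (s e) v -> cn ((T :&: F) :&: [set z | s z \in W]) (s e) v.
    move=> v ev; apply: cn_restrict => //; first by apply: cl; apply: subsetIr.
    by apply: cn_span ev.
  by apply: cn_trans (h _ yW); rewrite cn_sym; apply: h.
have bis : bispanning s t W F2.
  split.
    move=> z; rewrite !in_setI => /andP [zF]; rewrite inE => zW; split => //.
    by rewrite -(cl F (subxx _) z zF).
  exists ((T1 :&: F) :&: [set z | s z \in W]), ((T2 :&: F) :&: [set z | s z \in W]).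
  split; [exact: tree | exact: tree | | ].
    rewrite -!setIA; apply: disjointWl (subsetIl _ _) _.
    by rewrite disjoint_sym; apply: disjointWl (subsetIl _ _) _; rewrite disjoint_sym.
  by rewrite -setIUl -setIUl un setTI.
case: (Hat.2 W F2 bis) => [[_ F2T]|[v [_ F20]]].
  have : f \in F2 by rewrite F2T.
  rewrite in_setI in_setU1 => /andP [/orP [/eqP fe|fR] _]; first by rewrite fe eqxx in hef.
  by move: fS; rewrite (subsetP RS f fR).
have : e \in F2 by rewrite in_setI eF inE.
by rewrite F20 inE.
Qed.
End Fin.

End Part6.
Import Part6.

Lemma cn_pair (V E : finType) (s t : E -> V) (q : E) a b :
  s q != t q -> s q \in [set a; b] -> t q \in [set a; b] ->
  forall x, x \in [set a; b] -> cn s t [set q] a x.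
Proof.
move=> nq; have qq : q \in [set q] by rewrite inE.
have ab : cn s t [set q] (s q) (t q) := cn_edge s t qq.
move=> /set2P [] e1 /set2P [] e2 x /set2P [] ->; rewrite ?cn_refl //;
  rewrite e1 e2 ?eqxx in ab nq => //; by rewrite cn_sym.
Qed.

Lemma forest0 (V E : finType) (s t : E -> V) : forest s t set0.
Proof. by apply/forestP => z; rewrite inE. Qed.

Theorem mainTheorem17 (V E : finType) (s t : E -> V)
  (noloop : forall z : E, s z != t z)
  (Hat : atomic s t) (e f : E) (hef : e != f) :
  bispanning (contr_s s t e) (contr_t s t e)
             (contr_del_V s t e) (contr_del_E s t e f).
Proof.
have nle := noloop e.
have Hat' := Hat; case: Hat' => [[_ [T1 [T2 [sp1 sp2 dis un]]]] Hat2].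
set S := contr_del_E s t e f.
have fS : f \notin S by rewrite /S /contr_del_E !inE eqxx.
have eS : e \notin S by rewrite /S /contr_del_E !inE !eqxx /= !orbT andbF.
have mgne : forall x, Defs.merge s t e x != t e.
  by move=> x; rewrite /Defs.merge; case: (x =P t e) => [_|/eqP h].
have WV : forall x, (x \in contr_del_V s t e) = (x != t e) by move=> x; rewrite !inE andbT.
have mgid : forall x, x \in contr_del_V s t e -> Defs.merge s t e x = x.
  by move=> x; rewrite WV /Defs.merge => /negbTE ->.
have Wne : contr_del_V s t e != set0 by apply/set0Pn; exists (s e); rewrite WV.
case: (boolP [exists p, [&& p != e, s p \in [set s e; t e] & t p \in [set s e; t e]]]) =>
  [/existsP [p /and3P [pe sp tp]] | npar].
  have se2 : s e \in [set s e; t e] by rewrite !inE eqxx.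
  have te2 : t e \in [set s e; t e] by rewrite !inE eqxx orbT.
  have bis : bispanning s t [set s e; t e] [set e; p].
    split.
      by move=> z /set2P [] ->.
    exists [set e], [set p]; split.
    - split; first by rewrite sub1set !inE eqxx.
      split; last by apply: forest_acyclic; apply: forest1.
      split; first by apply/set0Pn; exists (s e).
      move=> x y xW yW; apply: (cn_trans (y := s e)); last exact: cn_pair nle se2 te2 _ yW.
      by rewrite cn_sym; apply: cn_pair nle se2 te2 _ xW.
    - split; first by rewrite sub1set !inE eqxx orbT.
      split; last by apply: forest_acyclic; apply: forest1; apply: noloop.
      split; first by apply/set0Pn; exists (s e).
      move=> x y xW yW; apply: (cn_trans (y := s e)); last exact: cn_pair (noloop p) sp tp _ yW.
      by rewrite cn_sym; apply: cn_pair (noloop p) sp tp _ xW.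
    - by rewrite disjoints1 inE eq_sym.
    - by [].
  case: (Hat2 _ _ bis) => [[WT FT]|[v [_ F0]]]; last first.
    by move: (set21 e p); rewrite F0 inE.
  have S0 : S = set0.
    apply/setP => z; rewrite /S /contr_del_E WT !inE.
    by rewrite andbF.
  rewrite S0; split; first by move=> z; rewrite inE.
  have xse : forall x, x \in contr_del_V s t e -> x = s e.
    move=> x; rewrite WV => xt; have : x \in [set s e; t e] by rewrite WT.
    by case/set2P => // xt'; rewrite xt' eqxx in xt.
  have st0 : spanning_tree (contr_s s t e) (contr_t s t e) (contr_del_V s t e) set0 set0.
    split; first exact: sub0set.
    split; last by apply: forest_acyclic; apply: forest0.
    split => // x y xW yW; rewrite (xse _ xW) (xse _ yW); exact: connect0.
  exists set0, set0; split => //; first by rewrite disjoints_subset sub0set.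
  by rewrite setU0.
have hS : forall z, (z \in S) = (z != e) && (z != f).
  move=> z; rewrite /S /contr_del_E !inE andbC; case: (eqVneq z e) => [->|ze].
    by rewrite !eqxx /= orbT.
  congr (_ && _); apply/negP => /andP [h1 h2].
  by move/existsP: npar; apply; exists z; rewrite ze !inE h1 h2.
have cS : #|S| + 2 = #|E|.
  have -> : S = [set: E] :\ e :\ f by apply/setP => z; rewrite hS !inE andbT andbC.
  rewrite -cardsT (cardsD1 e [set: E]) (cardsD1 f ([set: E] :\ e)) !inE eq_sym hef.
  rewrite /= -add1n; lia.
have cE : #|T1| + #|T2| = #|E|.
  by rewrite -cardsT -un -cardsUI (disjoint_setI0 dis) cards0 addn0.
have conn : forall (j : bool) x y, cn s t (if j then T1 else T2) x y.
  by move=> [] x y; [apply: (tree_span sp1) | apply: (tree_span sp2)]; rewrite inE.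
case: (Part3.partition nle (erefl #|S|) eS) => [[I [vI uI]] | tS]; last first.
  by case: (tight_false Hat hef sp1 sp2 dis un fS tS).
have [d iI eI] := vI.
have le : forall j, #|e |: I j| <= #|if j then T1 else T2|.
  move=> j; apply: (count_forest (erefl _) (iI j)) => z _; exact: conn.
have cI : #|e |: I true| + #|e |: I false| = #|S| + 2.
  have cU : #|I true| + #|I false| = #|S|.
    rewrite -uI -cardsUI.
    have -> : I true :&: I false = set0.
      by apply/setP => x; rewrite !inE; case: (boolP (x \in I true)) => // /d /negbTE ->.
    by rewrite cards0 addn0.
  rewrite !cardsU1 !eI /=; lia.
have full : forall j z, cn s t (e |: I j) (s z) (t z).
  move=> j z; apply: (full_span (K := if j then T1 else T2) (F := [set: E])) => //.
  - exact: iI.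
  - by move: (le true) (le false); case: j; lia.
split.
  by move=> z _; rewrite !WV /contr_s /contr_t !mgne.
exists (I true), (I false).
have tree : forall j, spanning_tree (contr_s s t e) (contr_t s t e) (contr_del_V s t e) S (I j).
  move=> j; split; first by rewrite -uI; case: j; [apply: subsetUl | apply: subsetUr].
  split; last by apply: forest_acyclic; apply: contr_forest (eI j) (iI j).
  split => // x y xW yW; rewrite -(mgid _ xW) -(mgid _ yW); apply: (down nle).
  by apply: cn_span (conn true x y) => z _; apply: full.
split; [exact: (tree true) | exact: (tree false) | | exact: uI].
by rewrite disjoints_subset; apply/subsetP => x /d; rewrite inE.
Qed.
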